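(* Fix $0\le\delta<1/2$. There is a constant $c_\delta>0$ depending only on $\delta$ such that for all integers $m\ge2$ and even $t\ge2$, setting $\sigma:=m^t$ and $\alpha:=2^{\delta t/2}m^{(1-\delta/2)t}$, there exist an integer $g\ge c_\delta\,2^{(1-h(\delta))t}$ and sets $X^{(1)},\dots,X^{(g)},Y^{(1)},\dots,Y^{(g)}\subseteq\{0,1,\dots,\sigma\}$ such that: (1) $|X^{(i)}|=|Y^{(i)}|=\sigma^{1/2}$ for all $1\le i\le g$; (2) $|X^{(i)}+Y^{(i)}|=\sigma$ for all $1\le i\le g$; (3) $|X^{(i)}+Y^{(j)}|\le\alpha$ for all $i\ne j$.
   Context: $h$ is the binary entropy function $h(x)=-x\log_2x-(1-x)\log_2(1-x)$. For sets $P,Q$ of integers, $P+Q=\{p+q:p\in P,q\in Q\}$. *)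

(* Defs.v *)
From mathcomp Require Import all_boot.
From Stdlib Require Import Reals.
Set Implicit Arguments. Unset Strict Implicit. Unset Printing Implicit Defensive.

(* A finite set of naturals is represented by a duplicate-free sequence. *)
Definition sumset (P Q : seq nat) : seq nat :=
  undup [seq p + q | p <- P, q <- Q].

(* base-2 logarithm and binary entropy h(x) = -x log2 x - (1-x) log2 (1-x)
   (Stdlib: ln 0 = 0, so h 0 = h 1 = 0 as per the usual convention). *)
Definition log2 (x : R) : R := (ln x / ln 2)%R.
Definition binent (x : R) : R :=
  (- x * log2 x - (1 - x) * log2 (1 - x))%R.

(* Main.v *)
Require Import Defs.
From mathcomp Require Import all_boot zify.
Set Implicit Arguments. Unset Strict Implicit. Unset Printing Implicit Defensive.

Section ZZ.
Variable m : nat.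
Fixpoint Zs (r : seq nat) : seq nat :=
  match r with
  | [::] => [:: 0]
  | c :: r' => [seq d + m * x | d <- iota 0 c, x <- Zs r']
  end.

Lemma size_Zs r : size (Zs r) = \prod_(c <- r) c.
Proof.
elim: r => [|c r IH] /=; first by rewrite big_nil.
by rewrite size_allpairs size_iota IH big_cons.
Qed.

Lemma Zs_lt r : 0 < m -> all (fun c => c <= m) r ->
  forall x, x \in Zs r -> x < m ^ size r.
Proof.
move=> m0; elim: r => [|c r IH] /=; first by move=> _ x; rewrite inE => /eqP ->.
case/andP=> cm hr x /allpairsP [[d y] /= [hd hy ->]].
have := IH hr y hy; rewrite mem_iota add0n in hd.
rewrite expnS => hy'.
have hd' : d < m by case/andP: hd => _ h; lia.
nia.
Qed.

Lemma Zs_uniq r : all (fun c => c <= m) r -> uniq (Zs r).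
Proof.
elim: r => [|c r IH] //= /andP [cm hr].
apply: allpairs_uniq => //; first exact: iota_uniq.
  exact: IH.
move=> [d1' x1'] [d2' x2'] /allpairsP [[d1 x1] /= [h1 _ [-> ->]]] /allpairsP [[d2 x2] /= [h2 _ [-> ->]]] /= E.
rewrite !mem_iota !add0n in h1 h2.
case/andP: h1 => _ h1; case/andP: h2 => _ h2.
have d1m : d1 < m by lia.
have d2m : d2 < m by lia.
have m0 : 0 < m by apply: leq_ltn_trans d1m.
have E1 : d1 = d2.
  have := congr1 (modn^~ m) E.
  by rewrite /= !(addnC _ (m * _)) !(mulnC m) !modnMDl !modn_small.
subst d2.
have : m * x1 = m * x2 by apply/eqP; rewrite -(eqn_add2l d1) E.
by move/eqP; rewrite eqn_mul2l eqn0Ngt m0 /= => /eqP ->.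
Qed.

Lemma Zs_add (T : Type) (l : seq T) (f g : T -> nat) :
  (forall k, 0 < f k) -> (forall k, 0 < g k) ->
  forall x y, x \in Zs (map f l) -> y \in Zs (map g l) ->
  x + y \in Zs (map (fun k => f k + g k - 1) l).
Proof.
move=> f0 g0; elim: l => [|k l IH] /= x y.
  by rewrite !inE => /eqP -> /eqP ->.
move=> /allpairsP [[d1 x1] /= [h1 hx ->]] /allpairsP [[d2 y2] /= [h2 hy ->]].
rewrite (_ : d1 + m * x1 + (d2 + m * y2) = (d1 + d2) + m * (x1 + y2)); last by rewrite mulnDr; lia.
apply: allpairs_f; last exact: IH.
move: h1 h2; rewrite !mem_iota !add0n /=.
have := f0 k; have := g0 k; lia.
Qed.

Lemma Zs_full (T : Type) (l : seq T) (b : T -> bool) :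
  forall y, y < m ^ size l ->
  y \in sumset (Zs (map (fun k => if b k then m else 1) l))
               (Zs (map (fun k => if b k then 1 else m) l)).
Proof.
rewrite /sumset; elim: l => [|k l IH] /= y.
  by rewrite expn0 ltnS leqn0 => /eqP ->; rewrite inE.
rewrite expnS => hy.
have m0 : 0 < m by case: m hy => //; rewrite mul0n.
have hq : y %/ m < m ^ size l by rewrite ltn_divLR // mulnC.
have := IH _ hq; rewrite !mem_undup => /allpairsP [[a c] /= [ha hc E]].
apply/allpairsP.
have ym : y = y %% m + m * (y %/ m) by rewrite mulnC addnC -divn_eq.
have hr : y %% m < m by rewrite ltn_mod.
case: (b k).
  exists (y %% m + m * a, 0 + m * c); split.
  - by apply: (allpairs_f (fun d x => d + m * x)) => //; rewrite mem_iota add0n.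
  - by apply: (allpairs_f (fun d x => d + m * x)) => //; rewrite mem_iota.
  - rewrite /= {1}ym E mulnDr; lia.
exists (0 + m * a, y %% m + m * c); split.
- by apply: (allpairs_f (fun d x => d + m * x)) => //; rewrite mem_iota.
- by apply: (allpairs_f (fun d x => d + m * x)) => //; rewrite mem_iota add0n.
- rewrite /= {1}ym E mulnDr; lia.
Qed.
End ZZ.

Definition XS m t (S : {set 'I_t}) :=
  Zs m [seq (if k \in S then m else 1) | k <- enum 'I_t].
Definition YS m t (S : {set 'I_t}) :=
  Zs m [seq (if k \in S then 1 else m) | k <- enum 'I_t].

Lemma prod_if m t (S : {set 'I_t}) :
  \prod_(c <- [seq (if k \in S then m else 1) | k <- enum 'I_t]) c = m ^ #|S|.
Proof.
rewrite big_map big_enum /= -big_mkcond /=.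
by rewrite prod_nat_const.
Qed.

Lemma size_XS m t S : size (@XS m t S) = m ^ #|S|.
Proof. by rewrite /XS size_Zs prod_if. Qed.

Lemma size_YS m t S : size (@YS m t S) = m ^ #|~: S|.
Proof.
rewrite /YS size_Zs -prod_if big_map [RHS]big_map; apply: eq_bigr => k _.
by rewrite inE; case: (k \in S).
Qed.

Lemma all_if1 (m : nat) t (S : {set 'I_t}) :
  0 < m -> all (fun c => c <= m) [seq (if k \in S then m else 1) | k <- enum 'I_t].
Proof. move=> m0; apply/allP => c /mapP [k _ ->]; by case: ifP. Qed.
Lemma all_if2 (m : nat) t (S : {set 'I_t}) :
  0 < m -> all (fun c => c <= m) [seq (if k \in S then 1 else m) | k <- enum 'I_t].
Proof. move=> m0; apply/allP => c /mapP [k _ ->]; by case: ifP. Qed.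

Lemma uniq_XS m t S : 0 < m -> uniq (@XS m t S).
Proof. by move=> m0; apply: Zs_uniq; apply: all_if1. Qed.

Lemma uniq_YS m t S : 0 < m -> uniq (@YS m t S).
Proof. by move=> m0; apply: Zs_uniq; apply: all_if2. Qed.

Lemma XS_le m t S : 0 < m -> all (fun x => x <= m ^ t) (@XS m t S).
Proof.
move=> m0; apply/allP => x hx; apply: ltnW.
have := Zs_lt m0 (all_if1 S m0) hx; by rewrite size_map size_enum_ord.
Qed.

Lemma YS_le m t S : 0 < m -> all (fun x => x <= m ^ t) (@YS m t S).
Proof.
move=> m0; apply/allP => x hx; apply: ltnW.
have := Zs_lt m0 (all_if2 S m0) hx; by rewrite size_map size_enum_ord.
Qed.

Lemma sumset_full m t S : 0 < m -> size (sumset (@XS m t S) (YS m S)) = m ^ t.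
Proof.
move=> m0.
have sub : forall y, y \in sumset (XS m S) (YS m S) -> y < m ^ t.
  move=> y; rewrite /sumset mem_undup => /allpairsP [[a b] /= [ha hb ->]].
  have := Zs_add (l := enum 'I_t) (f := fun k => if k \in S then m else 1)
                 (g := fun k => if k \in S then 1 else m) _ _ ha hb.
  have H : forall k : 'I_t, 0 < (if k \in S then m else 1) by move=> k; case: ifP.
  have H' : forall k : 'I_t, 0 < (if k \in S then 1 else m) by move=> k; case: ifP.
  move=> /(_ H H') hab.
  have := Zs_lt m0 _ hab; rewrite size_map size_enum_ord; apply.
  apply/allP => c /mapP [k _ ->]; case: ifP => _; lia.
have : perm_eq (sumset (XS m S) (YS m S)) (iota 0 (m ^ t)).
  apply: uniq_perm; [exact: undup_uniq | exact: iota_uniq |].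
  move=> y; rewrite mem_iota add0n /=; apply/idP/idP; first exact: sub.
  move=> hy; have := @Zs_full m _ (enum 'I_t) (fun k => k \in S) y.
  by rewrite size_enum_ord; apply.
by move/perm_size; rewrite size_iota.
Qed.

Lemma size_sumset_le (s1 s2 : seq nat) : size (sumset s1 s2) <= size s1 * size s2.
Proof. by rewrite /sumset; apply: leq_trans (size_undup _) _; rewrite size_allpairs. Qed.

Lemma sumset_cross m t (S T : {set 'I_t}) : 0 < m -> #|S| = #|T| ->
  size (sumset (@XS m t S) (YS m T)) <= 2 ^ #|S :\: T| * m ^ (t - #|S :\: T|).
Proof.
move=> m0 hST.
pose h := fun k : 'I_t => (if k \in S then m else 1) + (if k \in T then 1 else m) - 1.
have sub : {subset sumset (XS m S) (YS m T) <= Zs m [seq h k | k <- enum 'I_t]}.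
  move=> y; rewrite /sumset mem_undup => /allpairsP [[a b] /= [ha hb ->]].
  apply: (Zs_add (f := fun k => if k \in S then m else 1)
                 (g := fun k => if k \in T then 1 else m)) => //.
  - by move=> k; case: ifP.
  - by move=> k; case: ifP.
have := uniq_leq_size (undup_uniq _) sub; rewrite size_Zs big_map big_enum /=.
move=> H; apply: leq_trans H _.
have e1 : #|T :\: S| = #|S :\: T|.
  have := cardsID T S; have := cardsID S T; rewrite setIC hST; lia.
have e2 : #|S :\: T| + #|~: (T :\: S)| = t.
  by have := cardsC (T :\: S); rewrite e1 card_ord.
apply: (@leq_trans (\prod_(k : 'I_t) ((if k \in S :\: T then 2 else 1) *
                                         (if k \in ~: (T :\: S) then m else 1)))).
  apply: leq_prod => k _; rewrite /h !inE.
  case: (k \in S); case: (k \in T) => /=; lia.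
rewrite big_split /= -!big_mkcond /= !prod_nat_const.
have -> : t - #|S :\: T| = #|~: (T :\: S)| by rewrite -{1}e2 addKn.
by [].
Qed.

Lemma card_bigcup_le (T I : finType) (P : pred I) (B : I -> {set T}) :
  #|\bigcup_(i | P i) B i| <= \sum_(i | P i) #|B i|.
Proof.
elim/big_rec2: _ => [|i x y _ IH]; first by rewrite cards0.
apply: leq_trans (leq_card_setU _ _) _; by rewrite leq_add2l.
Qed.

Lemma cardsD_sym t (S T : {set 'I_t}) : #|S| = #|T| -> #|T :\: S| = #|S :\: T|.
Proof. move=> hST; have := cardsID T S; have := cardsID S T; rewrite setIC hST; lia. Qed.

Lemma ball_card t n D (S : {set 'I_t}) : #|S| = n ->
  #|[set T : {set 'I_t} | (#|T| == n) && (#|S :\: T| < D)]|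
    <= \sum_(j < D) 'C(n, j) * 'C(t - n, j).
Proof.
move=> hS.
set Bl := [set T : {set 'I_t} | _].
pose f := fun T : {set 'I_t} => (S :\: T, T :\: S).
have inj : {in Bl &, injective f}.
  move=> T1 T2 _ _ [e1 e2].
  have rec : forall T, T = (S :\: (S :\: T)) :|: (T :\: S).
    by move=> T; rewrite setDDr setDv set0U setIC setID.
  by rewrite (rec T1) (rec T2) e1 e2.
rewrite -(card_in_imset inj).
pose W := \bigcup_(j < D) setX [set A : {set 'I_t} | A \subset S & #|A| == j]
                               [set B : {set 'I_t} | B \subset ~: S & #|B| == j].
apply: (@leq_trans #|W|).
  apply: subset_leq_card; apply/subsetP => w /imsetP [T hT ->].
  rewrite inE in hT; case/andP: hT => /eqP hT hD.
  apply/bigcupP; exists (Ordinal hD) => //.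
  rewrite !inE /= eqxx subsetDl /= cardsD_sym ?hT ?hS // eqxx andbT.
  by apply/subsetP => z; rewrite !inE => /andP [->].
apply: leq_trans (card_bigcup_le _ _) _.
apply: leq_sum => j _.
rewrite cardsX !cards_draws hS.
have -> : #|~: S| = t - n by have := cardsC S; rewrite hS card_ord; lia.
by [].
Qed.

Lemma GV (t n D : nat) : 0 < D -> exists F : {set {set 'I_t}},
  [/\ (forall S, S \in F -> #|S| = n),
      (forall S T, S \in F -> T \in F -> S != T -> D <= #|S :\: T|) &
      'C(t, n) <= #|F| * \sum_(j < D) 'C(n, j) * 'C(t - n, j)].
Proof.
move=> D0.
pose U := [set S : {set 'I_t} | #|S| == n].
pose P := fun F : {set {set 'I_t}} => (F \subset U) &&
   [forall S in F, forall T in F, (S != T) ==> (D <= #|S :\: T|)].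
have [F maxF] : {F | maxset P F}.
  by apply: ex_maxset; exists set0; rewrite /P sub0set /=; apply/forall_inP => S; rewrite inE.
have PF := maxsetp maxF.
case/andP: PF => FU /forall_inP Fsep.
exists F; split.
- by move=> S /(subsetP FU); rewrite inE => /eqP.
- by move=> S T hS hT hST; have /forall_inP /(_ T hT) := Fsep S hS; rewrite hST.
pose ball := fun S : {set 'I_t} => [set T : {set 'I_t} | (#|T| == n) && (#|S :\: T| < D)].
have cover : U \subset \bigcup_(S in F) ball S.
  apply/subsetP => T hT; apply/negPn/negP => nc.
  have hTn : #|T| = n by move: hT; rewrite inE => /eqP.
  have PT : P (T |: F).
    apply/andP; split.
      by apply/subsetP => S; rewrite in_setU1 => /orP [/eqP -> //|/(subsetP FU)].
    have sep : forall S, S \in F -> D <= #|S :\: T|.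
      move=> S hS; rewrite leqNgt; apply/negP => lt; apply: (negP nc).
      apply/bigcupP; exists S => //; by rewrite inE hTn eqxx.
    have sizeS : forall S, S \in F -> #|S| = n.
      by move=> S /(subsetP FU); rewrite inE => /eqP.
    apply/forall_inP => S1; rewrite in_setU1 => /orP [/eqP ->|h1];
      apply/forall_inP => S2; rewrite in_setU1 => /orP [/eqP ->|h2].
    - by rewrite eqxx.
    - by apply/implyP => _; rewrite cardsD_sym ?sep // sizeS.
    - by apply/implyP => _; apply: sep.
    - by have /forall_inP /(_ S2 h2) := Fsep S1 h1.
  case/maxsetP: maxF => _ /(_ _ PT (subsetUr _ _)) eqF.
  apply: (negP nc); apply/bigcupP; exists T; first by rewrite -eqF setU11.
  by rewrite inE hTn eqxx setDv cards0.
have cU : #|U| = 'C(t, n) by rewrite card_draws card_ord.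
rewrite -cU; apply: leq_trans (subset_leq_card cover) _.
apply: leq_trans (card_bigcup_le _ _) _.
rewrite -sum_nat_const; apply: leq_sum => S hS.
apply: ball_card; by have := subsetP FU S hS; rewrite inE => /eqP.
Qed.

From Stdlib Require Import Reals Lra Lia ZArith.

Lemma INR_addn m n : INR (m + n) = (INR m + INR n)%R.
Proof. exact: plus_INR. Qed.
Lemma INR_muln m n : INR (m * n) = (INR m * INR n)%R.
Proof. exact: mult_INR. Qed.
Lemma INR_subn m n : n <= m -> INR (m - n) = (INR m - INR n)%R.
Proof. move=> h; apply: minus_INR; exact/leP. Qed.
Lemma INR_leq m n : m <= n -> (INR m <= INR n)%R.
Proof. move=> h; apply: le_INR; exact/leP. Qed.
Lemma INR_expn m n : INR (m ^ n) = (INR m ^ n)%R.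
Proof. by rewrite -pow_INR; congr INR; elim: n => //= n IH; rewrite expnS IH. Qed.
Lemma INR_leqR m n : (INR m <= INR n)%R -> m <= n.
Proof. move=> h; apply/leP; exact: INR_le. Qed.
Lemma INR_ltR m n : (INR m < INR n)%R -> m < n.
Proof. move=> h; apply/ltP; exact: INR_lt. Qed.

Lemma fact_eq n : n`! = Factorial.fact n.
Proof. elim: n => //= n IH; by rewrite factS IH. Qed.

Lemma bin_C n k : k <= n -> INR 'C(n, k) = C n k.
Proof.
move=> kn; rewrite /C; change (Init.Nat.sub n k) with (n - k); rewrite -!fact_eq -(bin_fact kn) !INR_muln.
have h1 : INR k`! <> 0%R by apply: not_0_INR; have := fact_gt0 k; lia.
have h2 : INR (n - k)`! <> 0%R by apply: not_0_INR; have := fact_gt0 (n - k); lia.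
field; split => //.
Qed.

Fixpoint rsum (f : nat -> R) (N : nat) : R :=
  match N with O => 0%R | S N' => (rsum f N' + f N')%R end.

Lemma rsum_sum f N : rsum f N.+1 = sum_f_R0 f N.
Proof. by elim: N => //= [|N IH]; [rewrite Rplus_0_l | rewrite -IH]. Qed.

Lemma rsum_ge0 f N : (forall i, 0 <= f i)%R -> (0 <= rsum f N)%R.
Proof. move=> h; elim: N => /= [|N IH]; [lra | have := h N; lra]. Qed.

Lemma rsum_mono f N M : (forall i, 0 <= f i)%R -> N <= M -> (rsum f N <= rsum f M)%R.
Proof.
move=> h; elim: M => [|M IH]; first by rewrite leqn0 => /eqP ->; lra.
rewrite leq_eqVlt => /orP [/eqP ->|]; first lra.
rewrite ltnS => /IH /=; have := h M; lra.
Qed.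

Lemma rsum_shift f a N : rsum f (a + N) = (rsum f a + rsum (fun i => f (a + i)%nat) N)%R.
Proof. elim: N => [|N IH] /=; first by rewrite addn0; lra. by rewrite addnS /= IH; lra. Qed.

Lemma rsum_le f g N : (forall i, (f i <= g i)%R) -> (rsum f N <= rsum g N)%R.
Proof. move=> h; elim: N => /= [|N IH]; [lra | have := h N; lra]. Qed.

Lemma rsum_scale c f N : rsum (fun i => c * f i)%R N = (c * rsum f N)%R.
Proof. elim: N => /= [|N IH]; [lra | rewrite IH; lra]. Qed.

Lemma rsum_const c N : rsum (fun _ => c) N = (INR N * c)%R.
Proof. elim: N => [|N IH]; first by rewrite /=; lra. rewrite [LHS]/= IH S_INR; lra. Qed.

Lemma INR_sum D (f : nat -> nat) : INR (\sum_(j < D) f j) = rsum (fun j => INR (f j)) D.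
Proof. elim: D => [|D IH]; first by rewrite big_ord0. by rewrite big_ord_recr /= INR_addn IH. Qed.

Definition bp n p j := (INR 'C(n, j) * p ^ j * (1 - p) ^ (n - j))%R.

Lemma bp_ge0 n p j : (0 <= p <= 1)%R -> (0 <= bp n p j)%R.
Proof.
move=> hp; rewrite /bp; apply: Rmult_le_pos; [apply: Rmult_le_pos|]; try apply: pow_le; try lra.
exact: pos_INR.
Qed.

Lemma bp_sum n p : rsum (bp n p) n.+1 = 1%R.
Proof.
rewrite rsum_sum.
have := binomial p (1 - p) n; rewrite (_ : p + (1 - p) = 1)%R; last lra.
rewrite pow1 => ->; apply: sum_eq => i hi.
by rewrite /bp bin_C //; apply/leP.
Qed.

Lemma bp_le1 n p j : (0 <= p <= 1)%R -> j <= n -> (bp n p j <= 1)%R.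
Proof.
move=> hp hj; rewrite -(bp_sum n p).
apply: Rle_trans (rsum_mono (f := bp n p) _ (_ : j.+1 <= n.+1)); last by [].
  by rewrite /=; have := rsum_ge0 j (fun i => bp_ge0 n i hp); lra.
by move=> i; apply: bp_ge0.
Qed.

Lemma bp_ratio n p m : (0 < p < 1)%R -> m < n ->
  bp n p m.+1 = (bp n p m * (INR (n - m) * p) / (INR m.+1 * (1 - p)))%R.
Proof.
move=> hp mn.
have e : (INR 'C(n, m.+1) * INR m.+1 = INR 'C(n, m) * INR (n - m))%R.
  by rewrite -!INR_muln mulnC mul_bin_left mulnC.
have hq : (1 - p <> 0)%R by lra.
have hm : INR m.+1 <> 0%R by apply: not_0_INR.
rewrite /bp.
have Hk : n - m = (n - m.+1).+1 by lia.
rewrite Hk in e *. set k := n - m.+1.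
have eC : INR 'C(n, m.+1) = (INR 'C(n, m) * INR k.+1 / INR m.+1)%R.
  rewrite -e; field => //.
rewrite eC [(p ^ m.+1)%R]/= [((1 - p) ^ k.+1)%R]/=.
field; split => //.
Qed.

Lemma le_div a b c : (0 < c)%R -> (a * c <= b)%R -> (a <= b / c)%R.
Proof.
move=> c0 h; apply: (Rmult_le_reg_r c) => //.
rewrite /Rdiv Rmult_assoc Rinv_l; lra.
Qed.

Lemma rsum_le_lt f g N : (forall i, i < N -> (f i <= g i)%R) -> (rsum f N <= rsum g N)%R.
Proof.
elim: N => [|N IH] h /=; first lra.
have := h N (ltnSn N); have := IH (fun i hi => h i (ltnW hi)); lra.
Qed.

Lemma exL (x : R) : (1 <= x)%R -> exists L : nat, ((INR L + 1)^2 <= x < (INR L + 2)^2)%R.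
Proof.
move=> x1; have [N hN] := INR_unbounded x.
have : (x < (INR N + 1)^2)%R by have := pos_INR N; nra.
elim: N {hN} => [|N IH] hx.
  by rewrite /= in hx; lra.
have [h|h] := Rlt_or_le x ((INR N + 1)^2)%R; first exact: IH.
exists N; split => //; by rewrite S_INR in hx; lra.
Qed.

Lemma window n p k : (0 < p < 1)%R -> 0 < n -> (INR k <= INR n * p)%R ->
  (bp n p k ^ 2 <= 32 / (INR n * p * (1 - p)))%R.
Proof.
move=> hp n0 hk.
set q := (1 - p)%R.
have nR : (1 <= INR n)%R by apply: (INR_leq (m := 1)).
set A := (INR n * p * q)%R.
have A0 : (0 < A)%R by rewrite /A /q; apply: Rmult_lt_0_compat; [apply: Rmult_lt_0_compat|]; lra.
have hp' : (0 <= p <= 1)%R by lra.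
have b0 := @bp_ge0 n p k hp'.
have kn : k <= n by apply: INR_leqR; nra.
have [A2|A2] := Rlt_or_le A 2.
  have b1 := @bp_le1 n p k hp' kn.
  apply: Rle_trans (_ : 1 <= _)%R; first nra.
  by apply: le_div => //; lra.
have [L [hL1 hL2]] : exists L : nat, ((INR L + 1)^2 <= A / 2 < (INR L + 2)^2)%R by apply: exL; lra.
have L0 := pos_INR L.
set c := ((INR L + 1) / A)%R.
have cA : (c * A = INR L + 1)%R by rewrite /c; field; lra.
have c0 : (0 <= c)%R by rewrite /c; apply: Rle_mult_inv_pos; lra.
have Lq : (INR L + 1 <= A / 2)%R by nra.
have Aq : (A <= INR n * q)%R.
  have h0 : (0 <= INR n * q)%R by rewrite /q; nra.
  rewrite /A; nra.
have Lc : (INR L * c <= 1/2)%R.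
  have : (INR L * c * A <= A / 2)%R by rewrite Rmult_assoc cA; nra.
  nra.
have H : forall i, i <= L -> (bp n p k * (1 - INR i * c) <= bp n p (k + i))%R.
  elim => [|i IH] hi; first by rewrite addn0 /=; lra.
  have hiL : (INR i + 1 <= INR L)%R by rewrite -S_INR; apply: INR_leq.
  have mn : k + i < n.
    apply: INR_ltR; rewrite INR_addn; rewrite /q in Aq; nra.
  rewrite addnS bp_ratio //.
  set a := INR (n - (k + i)).
  set b := INR (k + i).+1.
  have ha : (INR n * q - INR L + 1 <= a)%R.
    rewrite /a INR_subn ?INR_addn; [rewrite /q; nra | exact: ltnW].
  have hb : (b <= INR n * p + INR L)%R by rewrite /b S_INR INR_addn; lra.
  have hb0 : (0 < b)%R by rewrite /b; apply: lt_0_INR; apply/ltP.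
  have hr : (1 - c <= a * p / (b * q))%R.
    apply: le_div; first (rewrite /q; nra).
    have e1 : ((1 - c) * (b * q) <= (1 - c) * ((INR n * p + INR L) * q))%R.
      apply: Rmult_le_compat_l; first nra.
      by apply: Rmult_le_compat_r; rewrite /q; lra.
    apply: Rle_trans e1 _.
    have e2 : ((1 - c) * ((INR n * p + INR L) * q) * A =
               (A - (INR L + 1)) * ((INR n * p + INR L) * q))%R by rewrite -cA; ring.
    have e3 : ((INR n * q - INR L + 1) * p <= a * p)%R by apply: Rmult_le_compat_r; lra.
    apply: Rle_trans e3.
    apply: (Rmult_le_reg_r A) => //; rewrite e2.
    have key : ((INR n * q - INR L + 1) * p * A - (A - (INR L + 1)) * ((INR n * p + INR L) * q)
               = A * (p + 1) + (INR L + 1) * INR L * q)%R by rewrite /A /q; ring.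
    have k1 : (0 <= A * (p + 1))%R by nra.
    have k2 : (0 <= (INR L + 1) * INR L * q)%R.
      apply: Rmult_le_pos; [nra | rewrite /q; lra].
    lra.
  have hbm := IH (ltnW hi).
  rewrite S_INR.
  have hc1 : (0 <= 1 - INR i * c)%R.
    have : (INR i * c <= INR L * c)%R by apply: Rmult_le_compat_r; lra.
    lra.
  have : (bp n p k * (1 - INR i * c) * (1 - c) <= bp n p (k + i) * (a * p / (b * q)))%R.
    apply: Rmult_le_compat => //; [nra | nra].
  have : (0 <= bp n p k * (INR i * c * c))%R.
    apply: Rmult_le_pos => //; apply: Rmult_le_pos => //; apply: Rmult_le_pos => //; exact: pos_INR.
  have -> : (bp n p (k + i) * (a * p) / (b * (1 - p)) = bp n p (k + i) * (a * p / (b * q)))%R.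
    by rewrite /q /Rdiv; ring.
  have -> : (bp n p k * (1 - (INR i + 1) * c) = bp n p k * (1 - INR i * c) * (1 - c) - bp n p k * (INR i * c * c))%R by ring.
  lra.
have Hs : (INR (L + 1) * (bp n p k / 2) <= 1)%R.
  rewrite -rsum_const.
  have e : (rsum (fun _ => bp n p k / 2) (L + 1) <= rsum (fun i => bp n p (k + i)) (L + 1))%R.
    apply: rsum_le_lt => i hi.
    have hi' : i <= L by lia.
    have := H i hi'.
    have : (INR i * c <= 1/2)%R.
      apply: Rle_trans Lc; apply: Rmult_le_compat_r; first (rewrite /c; apply: Rle_mult_inv_pos; lra).
      exact: INR_leq.
    nra.
  apply: Rle_trans e _.
  have kL : k + (L + 1) <= n.+1.
    have nq : (INR n * p + INR n * q = INR n)%R by rewrite /q; ring.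
    have hnq : (0 <= INR n * q)%R by rewrite /q; nra.
    apply: INR_leqR; rewrite INR_addn INR_addn S_INR (S_INR n) (_ : INR 0 = 0%R) //; lra.
  have := @rsum_shift (bp n p) k (L + 1).
  have := @rsum_mono (bp n p) _ _ (fun i => @bp_ge0 n p i hp') kL.
  have := @rsum_ge0 (bp n p) k (fun i => @bp_ge0 n p i hp').
  rewrite bp_sum; lra.
rewrite INR_addn (_ : INR 1 = 1%R) // in Hs.
have h8 : (A / 8 < (INR L + 1)^2)%R by nra.
apply: le_div => //.
have e1 : (0 <= bp n p k * (INR L + 1) <= 2)%R by split; [apply: Rmult_le_pos; lra | lra].
have e2 := pow_incr _ _ 2 e1.
have e3 : (bp n p k ^ 2 * A <= bp n p k ^ 2 * (8 * (INR L + 1)^2))%R.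
  apply: Rmult_le_compat_l; [apply: pow_le; lra | lra].
apply: Rle_trans e3 _.
have -> : (bp n p k ^ 2 * (8 * (INR L + 1) ^ 2) = 8 * (bp n p k * (INR L + 1)) ^ 2)%R by ring.
simpl in e2; simpl; lra.
Qed.

Lemma exp_le x y : (x <= y)%R -> (exp x <= exp y)%R.
Proof. case=> [h|->]; [left; exact: exp_increasing | lra]. Qed.

Lemma pow_exp x n : (0 < x)%R -> (x ^ n = exp (INR n * ln x))%R.
Proof. move=> x0; rewrite -ln_pow // exp_ln //; exact: pow_lt. Qed.

Lemma bp_sym n p k : k <= n -> bp n p k = bp n (1 - p) (n - k).
Proof.
move=> kn; rewrite /bp bin_sub // subKn // (_ : (1 - (1 - p))%R = p); last ring.
ring.
Qed.

Lemma bp_bound n p k : (0 < p < 1)%R -> 0 < n ->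
  (bp n p k ^ 2 <= 32 / (INR n * p * (1 - p)))%R.
Proof.
move=> hp n0.
have nR : (1 <= INR n)%R by apply: (INR_leq (m := 1)).
have A0 : (0 < INR n * p * (1 - p))%R.
  by apply: Rmult_lt_0_compat; [apply: Rmult_lt_0_compat|]; lra.
case: (leqP k n) => kn; last first.
  rewrite /bp bin_small // (_ : INR 0 = 0%R) //.
  have : (0 <= 32 / (INR n * p * (1 - p)))%R by apply: Rle_mult_inv_pos; lra.
  simpl; lra.
have [hk|hk] := Rle_or_lt (INR k) (INR n * p).
  exact: window.
rewrite bp_sym //.
have := @window n (1 - p) (n - k) (ltac:(lra)) n0.
rewrite (_ : (1 - (1 - p))%R = p); last ring.
rewrite (_ : (INR n * (1 - p) * p)%R = (INR n * p * (1 - p))%R); last ring.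
apply; rewrite INR_subn //; lra.
Qed.

Definition ent p := (p * ln p + (1 - p) * ln (1 - p))%R.

Lemma C_le_bpZ n p j : (0 < p < 1/2)%R -> j <= n -> (INR j <= INR n * p)%R ->
  (INR 'C(n, j) <= bp n p j * exp (- (INR n * ent p)))%R.
Proof.
move=> hp jn hj.
have q0 : (0 < 1 - p)%R by lra.
have lnpq : (ln p <= ln (1 - p))%R by left; apply: ln_increasing; lra.
have key : (1 <= p ^ j * (1 - p) ^ (n - j) * exp (- (INR n * ent p)))%R.
  rewrite !pow_exp; try lra.
  rewrite -!exp_plus; apply: Rle_trans (Req_le _ _ (esym exp_0)) _; apply: exp_le.
  rewrite INR_subn // /ent.
  have : (0 <= (INR n * p - INR j) * (ln (1 - p) - ln p))%R by apply: Rmult_le_pos; lra.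
  have -> : (INR j * ln p + (INR n - INR j) * ln (1 - p) +
     - (INR n * (p * ln p + (1 - p) * ln (1 - p))) =
     (INR n * p - INR j) * (ln (1 - p) - ln p))%R by ring.
  lra.
have C0 := pos_INR 'C(n, j).
rewrite /bp.
have -> : (INR 'C(n, j) * p ^ j * (1 - p) ^ (n - j) * exp (- (INR n * ent p)) =
           INR 'C(n, j) * (p ^ j * (1 - p) ^ (n - j) * exp (- (INR n * ent p))))%R by ring.
nra.
Qed.

Lemma V_bound n p D : (0 < p < 1/2)%R -> 0 < n -> (INR D <= INR n * p + 1)%R ->
  (INR (\sum_(j < D) 'C(n, j) * 'C(n, j)) <=
   sqrt (32 / (INR n * p * (1 - p))) * exp (- (INR n * ent p)) ^ 2)%R.
Proof.
move=> hp n0 hD.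
have nR : (1 <= INR n)%R by apply: (INR_leq (m := 1)).
have hp' : (0 < p < 1)%R by lra.
have hp'' : (0 <= p <= 1)%R by lra.
set s := sqrt _. set Z := exp _.
have Z0 : (0 < Z)%R by apply: exp_pos.
have s0 : (0 <= s)%R by apply: sqrt_pos.
rewrite (INR_sum D (fun j => 'C(n, j) * 'C(n, j))).
have Dn : D <= n.+1 by apply: INR_leqR; rewrite S_INR; nra.
apply: Rle_trans (_ : rsum (fun j => s * Z ^ 2 * bp n p j) D <= _)%R.
  apply: rsum_le_lt => j hj.
  have jD : (INR j + 1 <= INR D)%R by rewrite -S_INR; apply: INR_leq.
  have hjn : (INR j <= INR n * p)%R by lra.
  have jn : j <= n by lia.
  have h1 := C_le_bpZ hp jn hjn.
  have b0 := @bp_ge0 n p j hp''.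
  have bs : (bp n p j <= s)%R.
    rewrite -(sqrt_pow2 (bp n p j)) //; apply: sqrt_le_1_alt; exact: bp_bound.
  have C0 := pos_INR 'C(n, j).
  rewrite INR_muln.
  have e1 : (INR 'C(n, j) * INR 'C(n, j) <= (bp n p j * Z) * (bp n p j * Z))%R.
    by apply: Rmult_le_compat.
  apply: Rle_trans e1 _.
  have : (0 <= (s - bp n p j) * (bp n p j * Z ^ 2))%R.
    apply: Rmult_le_pos; first lra.
    apply: Rmult_le_pos => //; apply: pow_le; lra.
  simpl; lra.
rewrite rsum_scale.
have := @rsum_mono (bp n p) _ _ (fun i => @bp_ge0 n p i hp'') Dn.
rewrite bp_sum.
have : (0 <= s * Z ^ 2)%R by apply: Rmult_le_pos => //; apply: pow_le; lra.
nra.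
Qed.

Lemma cbin n : 0 < n -> (16 ^ n <= INR 'C(n.*2, n) ^ 2 * (4 * INR n))%R.
Proof.
elim: n => // n IH _.
case: (posnP n) => [->|n0].
  rewrite /=; lra.
have IH' := IH n0.
have r1 : (INR (n.*2).+2 * INR 'C((n.*2).+1, n) = INR n.+1 * INR 'C((n.*2).+2, n.+1))%R.
  by rewrite -!INR_muln -mul_bin_diag.
have r2 : (INR (n.*2).+1 * INR 'C(n.*2, n) = INR n.+1 * INR 'C((n.*2).+1, n.+1))%R.
  by rewrite -!INR_muln -mul_bin_diag.
have r3 : 'C((n.*2).+1, n) = 'C((n.*2).+1, n.+1).
  by rewrite -bin_sub; [congr 'C(_, _); lia | lia].
rewrite r3 in r1.
have -> : (n.+1).*2 = (n.*2).+2 by rewrite doubleS.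
set c := INR 'C(n.*2, n) in IH' r2 *.
set c1 := INR 'C((n.*2).+1, n.+1) in r1 r2.
set c2 := INR 'C((n.*2).+2, n.+1) in r1 *.
have e2 : INR (n.*2).+2 = (2 * INR n + 2)%R by rewrite !S_INR -mul2n INR_muln /=; ring.
have e1 : INR (n.*2).+1 = (2 * INR n + 1)%R by rewrite !S_INR -mul2n INR_muln /=; ring.
rewrite e1 in r2; rewrite e2 in r1; rewrite S_INR in r1 r2 *.
have nR : (1 <= INR n)%R by apply: (INR_leq (m := 1)).
have hc2 : (c2 * (INR n + 1) = 2 * (2 * INR n + 1) * c)%R.
  apply: (Rmult_eq_reg_r (INR n + 1)); last lra.
  have : ((2 * INR n + 2) * c1 * (INR n + 1) = (INR n + 1) * c2 * (INR n + 1))%R by rewrite r1.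
  have : ((2 * INR n + 2) * ((2 * INR n + 1) * c) = (2 * INR n + 2) * ((INR n + 1) * c1))%R by rewrite r2.
  nra.
have pos : (0 <= c)%R by apply: pos_INR.
apply: (Rmult_le_reg_r (INR n + 1)); first lra.
have -> : (c2 ^ 2 * (4 * (INR n + 1)) * (INR n + 1) = 4 * (c2 * (INR n + 1)) ^ 2)%R by ring.
rewrite hc2 /=.
have : (4 * INR n * (INR n + 1) <= (2 * INR n + 1) * (2 * INR n + 1))%R by nra.
simpl in IH'.
have h16 : (0 <= 16 ^ n)%R by apply: pow_le; lra.
nra.
Qed.

Lemma ln2_pos : (0 < ln 2)%R.
Proof. rewrite -ln_1; apply: ln_increasing; lra. Qed.

Lemma INR_double n : INR n.*2 = (2 * INR n)%R.
Proof. by rewrite -mul2n INR_muln. Qed.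

Lemma Rpower_main n p : (0 < p < 1)%R ->
  Rpower 2 ((1 - binent p) * INR n.*2) = (4 ^ n * exp (2 * INR n * ent p))%R.
Proof.
move=> hp; rewrite /Rpower /binent /log2 /ent INR_double.
have l2 := ln2_pos.
have -> : ((1 - (- p * (ln p / ln 2) - (1 - p) * (ln (1 - p) / ln 2))) * (2 * INR n) * ln 2
          = INR n.*2 * ln 2 + 2 * INR n * (p * ln p + (1 - p) * ln (1 - p)))%R.
  rewrite INR_double; field; lra.
rewrite exp_plus -pow_exp; last lra.
congr (_ * _)%R; rewrite -mul2n pow_mult (_ : (2 ^ 2 = 4)%R) //; simpl; ring.
Qed.

Lemma final_real n p (g Vn Cn : nat) : (0 < p < 1/2)%R -> 0 < n ->
  Cn <= g * Vn ->
  (INR Vn <= sqrt (32 / (INR n * p * (1 - p))) * exp (- (INR n * ent p)) ^ 2)%R ->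
  (16 ^ n <= INR Cn ^ 2 * (4 * INR n))%R ->
  (INR g >= sqrt (p * (1 - p) / 128) * Rpower 2 ((1 - binent p) * INR n.*2))%R.
Proof.
move=> hp n0 hC hV hc.
have nR : (1 <= INR n)%R by apply: (INR_leq (m := 1)).
rewrite Rpower_main; last lra.
set Z := exp (- (INR n * ent p)).
set W := exp (2 * INR n * ent p).
have ZW : (Z ^ 2 * W = 1)%R.
  rewrite /Z /W /= Rmult_1_r -!exp_plus -exp_0; congr exp; ring.
have W0 : (0 < W)%R by apply: exp_pos.
have A0 : (0 < INR n * p * (1 - p))%R.
  by apply: Rmult_lt_0_compat; [apply: Rmult_lt_0_compat|]; lra.
set s := sqrt (32 / (INR n * p * (1 - p))).
set s' := sqrt (p * (1 - p) / 128).
have s0 : (0 < s)%R by apply: sqrt_lt_R0; apply: Rdiv_lt_0_compat; lra.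
have s'0 : (0 <= s')%R by apply: sqrt_pos.
have g0 := pos_INR g.
have hC' : (INR Cn <= INR g * INR Vn)%R by rewrite -INR_muln; apply: INR_leq.
have hCW : (INR Cn * W <= INR g * s)%R.
  have : (INR Cn * W <= INR g * (s * Z ^ 2) * W)%R.
    apply: Rmult_le_compat_r; first lra.
    apply: Rle_trans hC' _; apply: Rmult_le_compat_l => //.
  have -> : (INR g * (s * Z ^ 2) * W = INR g * s * (Z ^ 2 * W))%R by ring.
  by rewrite ZW Rmult_1_r.
have ss' : (s * s' = sqrt (/ (4 * INR n)))%R.
  rewrite /s /s' -sqrt_mult.
  - congr sqrt; field; lra.
  - by apply: Rle_mult_inv_pos; lra.
  - apply: Rle_mult_inv_pos; [apply: Rmult_le_pos|]; lra.
have cb : (4 ^ n * sqrt (/ (4 * INR n)) <= INR Cn)%R.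
  apply: Rsqr_incr_0_var; last exact: pos_INR.
  rewrite !Rsqr_pow2 Rpow_mult_distr pow2_sqrt; last by apply: Rlt_le; apply: Rinv_0_lt_compat; lra.
  rewrite -pow_mult Nat.mul_comm pow_mult (_ : (4 ^ 2 = 16)%R); last (simpl; ring).
  apply: (Rmult_le_reg_r (4 * INR n)); first lra.
  rewrite Rmult_assoc Rinv_l; lra.
apply: Rle_ge.
apply: (Rmult_le_reg_r s) => //.
apply: Rle_trans hCW.
have -> : (s' * (4 ^ n * W) * s = (4 ^ n * (s * s')) * W)%R by ring.
rewrite ss'; apply: Rmult_le_compat_r; lra.
Qed.

Lemma powE m n : m ^ n = expn m n.
Proof. elim: n => [|n IH] //=; by rewrite expnS -IH. Qed.

Lemma exists_set t k : k <= t -> exists S : {set 'I_t}, #|S| = k.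
Proof.
move=> kt.
have : 0 < #|[set A : {set 'I_t} | #|A| == k]| by rewrite card_draws card_ord bin_gt0.
case/card_gt0P => S; rewrite inE => /eqP hS; by exists S.
Qed.

Lemma good_set m t (S : {set 'I_t}) : 0 < m -> ~~ odd t -> #|S| = t %/ 2 ->
  [/\ uniq (XS m S), uniq (YS m S),
      all (fun x => x <= m ^ t) (XS m S),
      all (fun y => y <= m ^ t) (YS m S) &
      [/\ size (XS m S) = m ^ (t %/ 2), size (YS m S) = m ^ (t %/ 2)
        & size (sumset (XS m S) (YS m S)) = m ^ t]].
Proof.
move=> m0 ev hS; rewrite !powE; split.
- exact: uniq_XS.
- exact: uniq_YS.
- exact: (@XS_le m t S m0).
- exact: (@YS_le m t S m0).
split; [by rewrite size_XS hS | | exact: sumset_full].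
rewrite size_YS; congr (expn _ _).
have := cardsC S; rewrite hS card_ord.
have := odd_double_half t; rewrite (negbTE ev) add0n -mul2n; lia.
Qed.

Lemma binent0 : binent 0 = 0%R.
Proof. rewrite /binent /log2 Rminus_0_r ln_1; field; have := ln2_pos; lra. Qed.

Lemma up_nat (x : R) : (0 < x)%R -> exists D : nat, 0 < D /\ (x < INR D <= x + 1)%R.
Proof.
move=> x0; have [h1 h2] := archimed x.
have u0 : (0 <= up x)%Z by apply: le_IZR; lra.
exists (Z.to_nat (up x)).
have e : INR (Z.to_nat (up x)) = IZR (up x) by rewrite INR_IZR_INZ Z2Nat.id.
split; last by rewrite e; lra.
apply/ltP; apply: INR_lt; rewrite e /=; lra.
Qed.

Theorem mainTheorem3 :
  forall delta : R, (0 <= delta)%R -> (delta < 1/2)%R ->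
  exists c : R, (0 < c)%R /\
  forall m t : nat, 2 <= m -> 2 <= t -> ~~ odd t ->
    let sigma := m ^ t in
    let alpha := (Rpower 2 (delta * INR t / 2) *
                  Rpower (INR m) ((1 - delta / 2) * INR t))%R in
    exists (g : nat) (X Y : nat -> seq nat),
      (INR g >= c * Rpower 2 ((1 - binent delta) * INR t))%R /\
      (forall i, i < g ->
         [/\ uniq (X i), uniq (Y i),
             all (fun x => x <= sigma) (X i),
             all (fun y => y <= sigma) (Y i) &
             [/\ size (X i) = m ^ (t %/ 2), size (Y i) = m ^ (t %/ 2)
               & size (sumset (X i) (Y i)) = sigma]]) /\
      (forall i j, i < g -> j < g -> i <> j ->
         (INR (size (sumset (X i) (Y j))) <= alpha)%R).
Proof.
move=> delta d0 d1.
have ev2 : forall t, ~~ odd t -> t = (t %/ 2).*2.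
  move=> t ev; rewrite divn2; have := odd_double_half t; rewrite (negbTE ev) add0n => e.
  by rewrite {1}(esym e).
case: d0 => [dpos|<-].
-
  exists (sqrt (delta * (1 - delta) / 128)); split.
    by apply: sqrt_lt_R0; apply: Rdiv_lt_0_compat; [nra | lra].
  move=> m t hm ht ev sigma alpha.
  set n := t %/ 2.
  have tn : t = n.*2 by exact: ev2.
  have n0 : 0 < n by rewrite /n; lia.
  have m0 : 0 < m by lia.
  have nR : (1 <= INR n)%R by apply: (INR_leq (m := 1)).
  have [D [D0 [hD1 hD2]]] : exists D : nat, 0 < D /\ (INR n * delta < INR D <= INR n * delta + 1)%R.
    by apply: up_nat; nra.
  have [F [Fsz Fsep Fcnt]] := @GV t n D D0.
  pose Sel := fun i => nth set0 (enum F) i.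
  have SelF : forall i, i < #|F| -> Sel i \in F.
    by move=> i hi; rewrite -mem_enum; apply: mem_nth; rewrite -cardE.
  exists #|F|, (fun i => XS m (Sel i)), (fun i => YS m (Sel i)); split; [|split].
  + have -> : INR t = INR n.*2 by rewrite -tn.
    apply: (@final_real n delta #|F| (\sum_(j < D) 'C(n, j) * 'C(n, j)) 'C(n.*2, n)).
    * lra.
    * exact: n0.
    * have tn' : t - n = n by rewrite tn; lia.
      by move: Fcnt; rewrite tn' {1}tn.
    * apply: V_bound => //; lra.
    * exact: cbin.
  + move=> i hi; apply: good_set => //; exact: Fsz (SelF i hi).
  + move=> i j hi hj hij.
    have hSS : Sel i != Sel j.
      apply/negP => /eqP e; apply: hij.
      apply/eqP; rewrite -(nth_uniq set0 _ _ (enum_uniq (mem F))) -?cardE //; exact/eqP.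
    have dD := Fsep _ _ (SelF i hi) (SelF j hj) hSS.
    set d := #|Sel i :\: Sel j| in dD *.
    have hsz : #|Sel i| = #|Sel j| by rewrite !Fsz //; apply: SelF.
    have := sumset_cross m0 hsz => /INR_leq H.
    apply: Rle_trans H _.
    have dn : d <= n by rewrite /d -(Fsz _ (SelF i hi)); apply: subset_leq_card; apply: subsetDl.
    rewrite -!powE INR_muln !INR_expn /alpha /Rpower.
    have l2 := ln2_pos.
    have mR : (2 <= INR m)%R by apply: (INR_leq (m := 2)).
    have lm : (ln 2 <= ln (INR m))%R.
      case: mR => [h|<-]; [left; apply: ln_increasing => //; lra | lra].
    rewrite (_ : INR 2 = 2%R); last (simpl; ring).
    rewrite !pow_exp; try lra.
    rewrite -!exp_plus; apply: exp_le.
    have tn2 : t = 2 * n by rewrite tn mul2n.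
    rewrite INR_subn; last by lia.
    have tR : INR t = (2 * INR n)%R by rewrite tn INR_double.
    rewrite tR.
    have dR : (INR n * delta < INR d)%R by apply: Rlt_le_trans hD1 _; apply: INR_leq.
    have : (0 <= (INR d - INR n * delta) * (ln (INR m) - ln 2))%R by apply: Rmult_le_pos; lra.
    have key : (delta * (2 * INR n) / 2 * ln 2 + (1 - delta / 2) * (2 * INR n) * ln (INR m) -
               (INR d * ln 2 + (2 * INR n - INR d) * ln (INR m)) =
               (INR d - INR n * delta) * (ln (INR m) - ln 2))%R by field.
    rewrite -/d; lra.
-
  exists 1%R; split; first lra.
  move=> m t hm ht ev sigma alpha.
  have m0 : 0 < m by lia.
  have [S hS] := @exists_set t (t %/ 2) (leq_div _ _).
  exists (2 ^ t), (fun _ => XS m S), (fun _ => YS m S); split; [|split].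
  + rewrite binent0 Rminus_0_r Rmult_1_l Rmult_1_l Rpower_pow; last lra.
    rewrite INR_expn (_ : INR 2 = 2%R); [lra | simpl; ring].
  + by move=> i _; apply: good_set.
  + move=> i j _ _ _.
    have [_ _ _ _ [e1 e2 _]] := good_set m0 ev hS.
    apply: Rle_trans (INR_leq (size_sumset_le _ _)) _.
    rewrite e1 e2 !powE -expnD addnn -(ev2 t ev) -powE /alpha.
    rewrite (_ : (0 * INR t / 2 = 0)%R); last field.
    rewrite Rpower_O; last lra.
    rewrite (_ : ((1 - 0 / 2) * INR t = INR t)%R); last field.
    rewrite Rpower_pow; last by apply: lt_0_INR; apply/ltP.
    rewrite INR_expn; lra.
Qed.
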